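(* Let $\eta\in(0,1)$. With probability one, for every $j$ large enough and every $W\in\Sigma_{\lfloor\eta j\rfloor}$, one has $\#\mathcal S_j(\eta,W)\le j$.
   Context: Fix $d\ge1$. $\Sigma_j$ is the set of words of length $j$ over the alphabet $\{0,1\}^d$ and $\Sigma^*=\bigcup_{j\ge1}\Sigma_j$; for $w=w_1\cdots w_j\in\Sigma_j$ with $w_k=(w_k^{(1)},\dots,w_k^{(d)})$, $I_w=\prod_{i=1}^d[x_w^{(i)},x_w^{(i)}+2^{-j}]$ where $x_w^{(i)}=\sum_{k=1}^jw_k^{(i)}2^{-k}$. Let $(p_w)_{w\in\Sigma^*}$ be independent Bernoulli random variables with $\mathbb P(p_w=1)=2^{-d(1-\eta)|w|}$. Set $\mathcal S_j(\eta)=\{w\in\Sigma_j:p_w=1\}$ and, for $W\in\Sigma^*$, $\mathcal S_j(\eta,W)=\{w\in\mathcal S_j(\eta): I_w\subset I_W\}$. *)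

(* Defs.v *)
From HB Require Import structures.
From mathcomp Require Import all_boot all_order all_algebra.
From mathcomp Require Import all_classical all_reals all_analysis.
Set Implicit Arguments. Unset Strict Implicit. Unset Printing Implicit Defensive.
Import Order.TTheory GRing.Theory Num.Theory.
Local Open Scope classical_set_scope.
Local Open Scope ring_scope.

(* The alphabet {0,1}^d : a letter is a map 'I_d -> bool,
   letter a has coordinates a i = a^(i+1). *)
Definition letter (d : nat) := {ffun 'I_d -> bool}.

(* Words are finite sequences of letters; Sigma_j = words of size j. *)
Definition word (d : nat) := seq (letter d).

Definition letter0 (d : nat) : letter d := [ffun => false].

(* x_w^(i) = sum_{k=1}^{|w|} w_k^(i) 2^{-k}  (0-indexed: k ranges over 0..|w|-1) *)
Definition xcoord (R : realType) (d : nat) (w : word d) (i : 'I_d) : R :=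
  \sum_(k < size w) ((nth (letter0 d) w k i : nat)%:R / 2 ^+ k.+1).

Definition cube (R : realType) (d : nat) (w : word d) : set ('I_d -> R) :=
  [set x | forall i : 'I_d,
     @xcoord R d w i <= x i <= @xcoord R d w i + (2 : R) ^- size w].

Definition mutually_independent_RV (R : realType) (dT : measure_display)
  (T : measurableType dT) (P : probability T R) (I : eqType) (J : set I)
  (X : I -> {RV P >-> R}) : Prop :=
  forall (s : seq I), uniq s -> {subset s <= J} ->
  forall (B : I -> set R), (forall i, measurable (B i)) ->
  P (\bigcap_(i in [set` s]) (X i @^-1` B i)) =
  (\prod_(i <- s) P (X i @^-1` B i))%E.

Definition Sset (R : realType) (dT : measure_display) (T : measurableType dT)
  (P : probability T R) (d : nat) (p : word d -> {RV P >-> R})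
  (j : nat) (W : word d) (t : T) : {set j.-tuple (letter d)} :=
  [set w : j.-tuple (letter d) |
     (p (tval w) t == 1) && `[< @cube R d (tval w) `<=` @cube R d W >]].

(* Main.v *)
Require Import Defs.
From HB Require Import structures.
From mathcomp Require Import all_boot all_order all_algebra.
From mathcomp Require Import all_classical all_reals all_analysis.
From mathcomp Require Import zify ring lra.
Import Order.TTheory GRing.Theory Num.Theory.
Import numFieldNormedType.Exports.
Local Open Scope classical_set_scope.
Local Open Scope ring_scope.

Section Geo.
Variable d : nat.

Definition vstep (i : 'I_d) (n : nat) (a : letter d) : nat := (n.*2 + a i)%N.
Definition vl (i : 'I_d) (w : word d) : nat := foldl (vstep i) 0%N w.

Lemma foldl_gen i z s : foldl (vstep i) z s = (z * 2 ^ size s + vl i s)%N.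
Proof.
elim/last_ind: s => [|s a IH]; first by rewrite /vl /= muln1 addn0.
rewrite /vl !foldl_rcons -/(vl i s) IH /vstep size_rcons expnS -!muln2; lia.
Qed.

Lemma vl_rcons i s a : vl i (rcons s a) = ((vl i s).*2 + a i)%N.
Proof. by rewrite /vl foldl_rcons. Qed.

Lemma vl_lt i s : (vl i s < 2 ^ size s)%N.
Proof.
elim/last_ind: s => [|s a IH]; first by [].
rewrite vl_rcons size_rcons expnS -muln2; case: (a i) => /=; lia.
Qed.

Lemma vl_cat i s1 s2 : vl i (s1 ++ s2) = (vl i s1 * 2 ^ size s2 + vl i s2)%N.
Proof. by rewrite /vl foldl_cat foldl_gen. Qed.

Lemma vl_inj s t : size s = size t -> (forall i, vl i s = vl i t) -> s = t.
Proof.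
elim/last_ind: s t => [|s a IH] t.
  by case: t.
elim/last_ind: t => [|t b _]; first by rewrite size_rcons.
rewrite !size_rcons => -[hs] hv.
have h i : (vl i s = vl i t) /\ a i = b i.
  have := hv i; rewrite !vl_rcons => e.
  have eo := congr1 odd e; rewrite !oddD !odd_double /= in eo.
  have ab : a i = b i by move: eo; case: (a i); case: (b i).
  split => //; move: e; rewrite ab => /eqP; rewrite eqn_add2r => /eqP.
  by move/(congr1 half); rewrite !doubleK.
rewrite (IH t hs (fun i => (h i).1)); congr rcons.
by apply/ffunP => i; exact: (h i).2.
Qed.

Variable R : realType.

Lemma xcoordE w i : @xcoord R d w i = (vl i w)%:R / 2 ^+ size w.
Proof.
elim/last_ind: w => [|w a IH].
  by rewrite /xcoord big_ord0 /= mul0r.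
rewrite /xcoord size_rcons big_ord_recr /=.
rewrite (eq_bigr (fun k : 'I_(size w) => ((nth (letter0 d) w k i : nat)%:R / 2 ^+ k.+1))); last first.
  by move=> k _; rewrite nth_rcons ltn_ord.
rewrite -/(xcoord R w i) IH nth_rcons ltnn eqxx vl_rcons natrD -muln2 natrM exprS.
have h2 : (2 : R) ^+ size w != 0 by rewrite expf_neq0.
have h3 : (2 : R) != 0 by [].
field.
exact: h2.
Qed.


Lemma divK_le (K : R) (x y : nat) : 0 < K -> x%:R / K <= y%:R / K -> (x <= y)%N.
Proof. by move=> K0; rewrite ler_pM2r ?invr_gt0 // ler_nat. Qed.

Lemma cube_sub_take (w W : word d) :
  (size W <= size w)%N -> @cube R d w `<=` @cube R d W -> take (size W) w = W.
Proof.
move=> hm hsub; set m := size W; set j := size w.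
apply: vl_inj; first by rewrite size_take; case: ltnP => //; rewrite /m; lia.
move=> i.
have ew : w = take m w ++ drop m w by rewrite cat_take_drop.
have sd : size (drop m w) = (j - m)%N by rewrite size_drop.
have st : size (take m w) = m by rewrite size_take; case: ltnP => //; rewrite /m /j; lia.
set a := vl i W; set b := vl i (take m w); set c := vl i (drop m w).
set E := (2 ^ (j - m))%N.
have hc : (c < E)%N by rewrite /c /E -sd vl_lt.
have hvw : vl i w = (b * E + c)%N by rewrite {1}ew vl_cat sd.
set K := (2 : R) ^+ j.
have K0 : 0 < K by rewrite /K exprn_gt0.
have hK : K = 2 ^+ m * (E%:R) by rewrite /K /E natrX -exprD subnKC.
have hm0 : (2 : R) ^+ m != 0 by rewrite expf_neq0.
have hE0 : (E%:R : R) != 0 by rewrite pnatr_eq0 /E expn_eq0.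
have xwE : @xcoord R d w i = (b * E + c)%:R / K by rewrite xcoordE hvw.
have xWE : @xcoord R d W i = (a * E)%:R / K.
  by rewrite xcoordE hK natrM; field; rewrite hm0 hE0.
have inv_j : (2 : R) ^- j = 1%:R / K by rewrite /K div1r.
have inv_m : (2 : R) ^- m = E%:R / K by rewrite hK; field; rewrite hm0 hE0.
have cw0 : @cube R d w (fun k => @xcoord R d w k).
  move=> k /=; rewrite lexx /= lerDl invr_ge0 exprn_ge0 //.
have cw1 : @cube R d w (fun k => @xcoord R d w k + 2 ^- j).
  by move=> k /=; rewrite lexx andbT lerDl invr_ge0 exprn_ge0.
have /(_ i) /andP [H1 _] := hsub _ cw0.
have /(_ i) /andP [_ H2] := hsub _ cw1.
rewrite xwE xWE in H1; rewrite xwE xWE inv_j inv_m in H2.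
move: H2; rewrite !mul1r => H2.
have H2' : ((b*E+c)+1)%:R / K <= ((a*E)+E)%:R/K.
  move: H2; set u := (b*E+c)%N; set v := (a*E)%N.
  by rewrite !natrD !mulrDl mul1r.
have l1 := @divK_le _ _ _ K0 H1; have l2 := @divK_le _ _ _ K0 H2'.
have hab : (a <= b)%N.
  rewrite leqNgt; apply/negP => hlt.
  have : ((b.+1) * E <= a * E)%N by rewrite leq_mul2r hlt orbT.
  rewrite mulSn; lia.
have hba : (b <= a)%N.
  rewrite leqNgt; apply/negP => hlt.
  have : ((a.+1) * E <= b * E)%N by rewrite leq_mul2r hlt orbT.
  rewrite mulSn; lia.
by apply/eqP; rewrite eqn_leq hab hba.
Qed.

End Geo.

Lemma fin_series (R : realType) (u : nat -> R) : cvgn (series u) ->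
  (\sum_(n <oo) (u n)%:E < +oo)%E.
Proof.
move=> cu.
have -> : (\sum_(n <oo) (u n)%:E)%E = lim ((EFin \o series u) @ \oo).
  by apply: congr_lim; apply/funext => n /=; rewrite /series /= sumEFin.
by rewrite EFin_lim // ltry.
Qed.
Arguments fin_series {R u}.

Lemma boole d (T : measurableType d) (R : realType) (mu : {measure set T -> \bar R})
  (I : Type) (r : seq I) (Pr : pred I) (F : I -> set T) :
  (forall i, Pr i -> measurable (F i)) ->
  (mu (\big[setU/set0]_(i <- r | Pr i) F i) <= \sum_(i <- r | Pr i) mu (F i))%E.
Proof.
move=> mF; elim: r => [|i r IH]; first by rewrite !big_nil measure0.
rewrite !big_cons; case: ifP => Pi //.
apply: le_trans (measureU2 _ _ _) _ => //; [exact: mF| exact: bigsetU_measurable |].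
by rewrite leeD2l.
Qed.
Arguments boole {d T R} mu {I r Pr F}.

Lemma bigsetU_in T (I : eqType) (r : seq I) (Pr : pred I) (F : I -> set T) i x :
  i \in r -> Pr i -> F i x -> (\big[setU/set0]_(i <- r | Pr i) F i) x.
Proof.
elim: r => // j r IH; rewrite inE big_cons => /orP [/eqP <- | ir] Pi Fx.
  by rewrite Pi; left.
by case: ifP => _; [right|]; exact: IH.
Qed.
Arguments bigsetU_in {T I r Pr F} i {x}.

Lemma expn_mono n m k : (n <= m)%N -> (n ^ k <= m ^ k)%N.
Proof. by move=> nm; elim: k => // k IH; rewrite !expnS leq_mul. Qed.

Lemma ffact_le n k : (n ^_ k <= n ^ k)%N.
Proof.
elim: k n => // k IH n; rewrite ffactnS expnS leq_mul //.
apply: leq_trans (IH _) _; apply: expn_mono; exact: leq_pred.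
Qed.

Lemma card_cand (R : realType) d (j : nat) (W : word d) : (size W <= j)%N ->
  (#|[set w : j.-tuple (letter d) | `[< @cube R d (tval w) `<=` @cube R d W >]]%SET|
     <= 2 ^ (d * (j - size W)))%N.
Proof.
move=> hWj; set m := size W; set A := [set w : j.-tuple (letter d) | _]%SET.
pose f (w : j.-tuple (letter d)) : {ffun 'I_(j - m) -> letter d} :=
  [ffun k : 'I_(j - m) => nth (letter0 d) w (m + k)].
have inj : {in A &, injective f}.
  move=> w1 w2; rewrite !inE => /asboolP h1 /asboolP h2 ef.
  have t1 : take m w1 = W.
    apply: (@cube_sub_take d R (tval w1) W); last exact/asboolP.
    by rewrite (size_tuple w1).
  have t2 : take m w2 = W.
    apply: (@cube_sub_take d R (tval w2) W); last exact/asboolP.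
    by rewrite (size_tuple w2).
  apply: val_inj; apply: (@eq_from_nth _ (letter0 d)); first by rewrite !size_tuple.
  move=> k; rewrite size_tuple => kj.
  case: (ltnP k m) => km.
    by rewrite -(nth_take _ km) -/m t1 -t2 nth_take.
  have kmj : (k - m < j - m)%N by rewrite ltn_sub2r // (leq_ltn_trans km).
  have := congr1 (fun g : {ffun 'I_(j - m) -> letter d} => g (Ordinal kmj)) ef; rewrite !ffunE /= subnKC //.
rewrite -(card_in_imset inj); apply: leq_trans (max_card _) _.
by rewrite card_ffun card_ord card_ffun card_ord card_bool -expnM.
Qed.

Lemma numeric (R : realType) (d n m : nat) (hd : (0 < d)%N) (eta : R) (eta0 : 0 < eta) (eta1 : eta < 1)
  (hm : m = Num.truncn (eta * n.+1%:R)) :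
  ('C(2 ^ (d * (n.+1 - m)), n.+2)%:R *
     (2 `^ (- (d%:R * (1 - eta) * n.+1%:R))) ^+ n.+2) *+ ((2 ^ d) ^ m)
  <= (2 ^ d)%:R ^+ 3 * exp_coeff ((2 ^ d)%:R ^+ 2 : R) n.
Proof.
set j := n.+1; set k := n.+2.
set q : R := 2 `^ _.
set N := (2 ^ (d * (j - m)))%N.
set x : R := (2 ^ d)%:R.
have x1 : 1 < x by rewrite /x ltr1n -[1%N]/(2 ^ 0)%N ltn_exp2l.
have x0 : 0 <= x by apply: le_trans (ltW x1).
have q0 : 0 <= q := powR_ge0 _ _.
have hjlt : eta * j%:R < m%:R + 1.
  by have := truncnS_gt (eta * j%:R); rewrite -hm -natr1.
have hmj : (m <= j)%N.
  rewrite hm truncn_le_nat.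
  have h : eta * j%:R <= j%:R.
    by rewrite -[leRHS]mul1r; apply: ler_wpM2r => //; exact: ltW.
  have ek : (j.+1%:R : R) = j%:R + 1 by rewrite -natr1.
  rewrite -/j ek; lra.
have hNq : N%:R * q <= x.
  have eN : N%:R = 2 `^ ((d * (j - m))%:R) :> R by rewrite powR_mulrn // natrX.
  have ex : x = 2 `^ (d%:R) by rewrite powR_mulrn // /x natrX.
  rewrite eN /q -powRD; last by apply/implyP.
  rewrite ex; apply: ler_powR; first by rewrite ler1n.
  rewrite natrM natrB //.
  have d0 : 0 <= (d%:R : R) by [].
  have := @mulr_ge0 _ (d%:R : R) (m%:R + 1 - eta * j%:R) d0 (ltW (_ : 0 < m%:R + 1 - eta * j%:R)).
  move=> /(_ ltac:(lra)) h; nra.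
have hC : ('C(N, k)%:R : R) * k`!%:R <= N%:R ^+ k.
  by rewrite -natrM bin_ffact -natrX ler_nat ffact_le.
have kf : 0 < (k`!%:R : R) by rewrite ltr0n fact_gt0.
have eK : (((2 ^ d) ^ m)%N%:R : R) = x ^+ m by rewrite natrX.
rewrite -mulr_natr eK exp_coeffE /=.
have s1 : ('C(N, k)%:R : R) * q ^+ k <= x ^+ k / k`!%:R.
  rewrite ler_pdivlMr //.
  apply: (@le_trans _ _ (N%:R ^+ k * q ^+ k)).
    rewrite mulrAC; apply: ler_wpM2r => //; exact: exprn_ge0.
  rewrite -exprMn; apply: lerXn2r => //; rewrite nnegrE //.
  by apply: mulr_ge0.
have s2 : x ^+ m <= x ^+ j by rewrite ler_eXn2l.
apply: (@le_trans _ _ (x ^+ k / k`!%:R * x ^+ j)).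
  apply: ler_pM => //.
    by apply: mulr_ge0 => //; exact: exprn_ge0.
  exact: exprn_ge0.
have ef : x ^+ k * x ^+ j = x ^+ 3 * (x ^+ 2) ^+ n.
  by rewrite -exprM -!exprD; congr (_ ^+ _); rewrite /k /j; lia.
rewrite mulrAC ef [X in _ <= X]mulrCA [X in _ <= X]mulrC.
apply: ler_wpM2l.
  by apply: mulr_ge0; apply: exprn_ge0 => //; apply: exprn_ge0.
rewrite lef_pV2 ?posrE ?ltr0n ?fact_gt0 // ler_nat leq_fact //.
by rewrite /k; lia.
Qed.

Theorem lemma3 (R : realType) (dT : measure_display) (T : measurableType dT)
  (P : probability T R) (d : nat) (hd : (0 < d)%N) (eta : R)
  (heta : 0 < eta < 1)
  (p : word d -> {RV P >-> R})
  (hp1 : forall w : word d, (0 < size w)%N ->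
     P (p w @^-1` [set 1]) = (2 `^ (- (d%:R * (1 - eta) * (size w)%:R)))%:E)
  (hp0 : forall w : word d, (0 < size w)%N ->
     P (p w @^-1` [set 0]) = (1 - 2 `^ (- (d%:R * (1 - eta) * (size w)%:R)))%:E)
  (hind : mutually_independent_RV [set w : word d | (0 < size w)%N] p) :
  \forall t \ae P, exists N : nat, forall j : nat, (N <= j)%N ->
    forall W : (Num.truncn (eta * j%:R)).-tuple (letter d),
      (#|Sset p j (tval W) t| <= j)%N.
Proof.
move: heta => /andP [eta0 eta1].
pose m (j : nat) := Num.truncn (eta * j%:R).
pose q (j : nat) : R := 2 `^ (- (d%:R * (1 - eta) * j%:R)).
pose Cand (j : nat) (W : word d) : {set j.-tuple (letter d)} :=
  [set w : j.-tuple (letter d) | `[< @cube R d (tval w) `<=` @cube R d W >]]%SET.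
pose Ev (j : nat) (A : {set j.-tuple (letter d)}) : set T :=
  \bigcap_(i in [set` map (@tval j (letter d)) (enum A)]) (p i @^-1` [set 1]).
pose F (n : nat) : set T :=
  \big[setU/set0]_(W : (m n.+1).-tuple (letter d))
   \big[setU/set0]_(A : {set n.+1.-tuple (letter d)} |
        (A \subset Cand n.+1 W) && (#|A| == n.+2)) Ev n.+1 A.
have mEv j A : measurable (Ev j A).
  rewrite /Ev bigcap_seq; apply: bigsetI_measurable => i _.
  exact: measurable_funPTI (measurable_set1 _).
have mF n : measurable (F n).
  by apply: bigsetU_measurable => W _; apply: bigsetU_measurable => A _; exact: mEv.
have PEv j A : (0 < j)%N -> P (Ev j A) = ((q j) ^+ #|A|)%:E.
  move=> j0; rewrite /Ev.
  rewrite (hind (map (@tval j _) (enum A)) _ _ (fun _ => [set 1])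
      (fun _ => measurable_set1 1)); last first.
  - by move=> i /mapP [w _ ->]; apply: mem_set; rewrite /= size_tuple.
  - by rewrite map_inj_uniq ?enum_uniq //; exact: val_inj.
  rewrite big_map big_enum /=.
  rewrite (eq_bigr (fun=> (q j)%:E)); last by move=> w _; rewrite hp1 ?size_tuple.
  by rewrite prodEFin prodr_const.
have mj j : (m j <= j)%N.
  rewrite /m truncn_le_nat.
  have h : eta * j%:R <= j%:R.
    by rewrite -[leRHS]mul1r; apply: ler_wpM2r => //; exact: ltW.
  rewrite -natr1; lra.
have PF n : (P (F n) <= ((2 ^ d)%:R ^+ 3 * exp_coeff ((2 ^ d)%:R ^+ 2 : R) n)%:E)%E.
  set j := n.+1.
  apply: le_trans (boole P _) _ => [W _ |].
    by apply: bigsetU_measurable => A _; exact: mEv.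
  apply: (@le_trans _ _ (\sum_(W : (m j).-tuple (letter d))
      \sum_(A : {set j.-tuple (letter d)} | (A \subset Cand j W) && (#|A| == j.+1))
         ((q j) ^+ j.+1)%:E)%E).
    apply: lee_sum => W _; apply: le_trans (boole P _) _ => [A _|].
      exact: mEv.
    apply: lee_sum => A /andP [_ /eqP cA].
    have := PEv n.+1 A isT; rewrite cA => <-; exact: lexx.
  rewrite (eq_bigr (fun W : (m j).-tuple (letter d) => (\sum_(A : {set j.-tuple (letter d)} |
      (A \subset Cand j W) && (#|A| == j.+1)) ((q j) ^+ j.+1))%:E)); last first.
    by move=> W _; rewrite sumEFin.
  rewrite sumEFin lee_fin.
  apply: (@le_trans _ _ (\sum_(W : (m j).-tuple (letter d))
      ('C(2 ^ (d * (j - m j)), j.+1)%:R * q j ^+ j.+1))).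
    apply: ler_sum => W _.
    have -> : \sum_(A : {set j.-tuple (letter d)} | (A \subset Cand j W) && (#|A| == j.+1))
        q j ^+ j.+1 = q j ^+ j.+1 *+ #|[set A : {set j.-tuple (letter d)} |
          (A \subset Cand j W) & #|A| == j.+1]%SET|.
      by rewrite -sumr_const; apply: eq_bigl => A; rewrite inE.
    rewrite cards_draws -mulr_natl; apply: ler_wpM2r.
      by rewrite exprn_ge0 // powR_ge0.
    rewrite ler_nat leq_bin2l //.
    have := @card_cand R d j W; rewrite (size_tuple W); apply.
    exact: mj.
  have -> : \sum_(W : (m j).-tuple (letter d)) ('C(2 ^ (d * (j - m j)), j.+1)%:R * q j ^+ j.+1)
    = ('C(2 ^ (d * (j - m j)), j.+1)%:R * q j ^+ j.+1) *+ #|{: (m j).-tuple (letter d)}|.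
    by rewrite -sumr_const; apply: eq_bigl => W; rewrite inE.
  rewrite card_tuple card_ffun card_ord card_bool.
  exact: numeric.
have cvS : cvgn (series (fun n => (2 ^ d)%:R ^+ 3 * exp_coeff ((2 ^ d)%:R ^+ 2 : R) n)).
  have -> : series (fun n => (2 ^ d)%:R ^+ 3 * exp_coeff ((2 ^ d)%:R ^+ 2 : R) n) =
      (fun n => (2 ^ d)%:R ^+ 3 * series (exp_coeff ((2 ^ d)%:R ^+ 2 : R)) n).
    by apply/funext => n; rewrite /series /= mulr_sumr.
  apply: is_cvgMr; exact: is_cvg_series_exp_coeff.
have fin : (\sum_(n <oo) P (F n) < +oo)%E.
  apply: (le_lt_trans _ (fin_series cvS)).
  by apply: lee_nneseries => // n _; exact: PF.
have L0 : P (lim_sup_set F) = 0%E by apply: lim_sup_set_cvg0.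
exists (lim_sup_set F); split => //.
  apply: bigcap_measurableType => k _; apply: bigcup_measurable => i _; exact: mF.
move=> t /= Hnot n _.
apply: contrapT => hk; apply: Hnot; exists n.+1 => -[//|k] hkn W.
rewrite leqNgt; apply/negP => hS; apply: hk.
exists k => //=.
rewrite /F; apply: (bigsetU_in W); [exact: mem_index_enum | done | ].
set S := Sset p k.+1 W t.
pose A := [set x in take k.+2 (enum S)]%SET.
apply: (bigsetU_in A); first exact: mem_index_enum.
  apply/andP; split.
    apply/fintype.subsetP => x; rewrite inE => /mem_take; rewrite mem_enum /S /Sset inE.
    by case/andP => _ h; rewrite /Cand inE.
  rewrite cardsE; move/card_uniqP: (take_uniq k.+2 (enum_uniq (mem S))) => ->.
  by rewrite size_takel // -cardE.
move=> i /= /mapP [w wA ->]; move: wA; rewrite mem_enum inE => /mem_take.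
by rewrite mem_enum /S /Sset inE => /andP [/eqP h _].
Qed.
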